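(* Let $G$ be a topological group and $U$ a nonempty open subset of $G$. Then the open cover $\mathcal{U}=\{g\cdot U\}_{g\in G}$ of $G$ admits a $\mathcal{U}$-small partition of unity.
   Context: A partition of unity on $X$ indexed by a nonempty set $S$ is a family $\{f_s\}_{s\in S}$ of functions $f_s:X\to[0,1]$ with $\sum_{s\in S}f_s(x)=1$ for all $x$, such that the induced map $f:X\to l_1(S)$, $f(x)(s)=f_s(x)$, is continuous (where $l_1(S)$ carries the norm $\|g\|=\sum_{s}|g(s)|$). It is $\mathcal{U}$-small if for each $s\in S$ the carrier $f_s^{-1}((0,1])$ is contained in some element of $\mathcal{U}$. *)

(* Defs.v *)
From Stdlib Require Import Reals List.
Import ListNotations.
Open Scope R_scope.

Record TopGroup : Type := {
  carrier :> Type;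
  mul : carrier -> carrier -> carrier;
  inv : carrier -> carrier;
  one : carrier;
  mul_assoc : forall x y z, mul x (mul y z) = mul (mul x y) z;
  mul_one_l : forall x, mul one x = x;
  mul_one_r : forall x, mul x one = x;
  mul_inv_l : forall x, mul (inv x) x = one;
  mul_inv_r : forall x, mul x (inv x) = one;
  is_open : (carrier -> Prop) -> Prop;
  open_full : is_open (fun _ => True);
  open_inter : forall A B, is_open A -> is_open B -> is_open (fun x => A x /\ B x);
  open_union : forall (I : Type) (F : I -> carrier -> Prop),
      (forall i, is_open (F i)) -> is_open (fun x => exists i, F i x);
  mul_cont : forall x y (W : carrier -> Prop), is_open W -> W (mul x y) ->
      exists A B : carrier -> Prop, is_open A /\ is_open B /\ A x /\ B y /\
        (forall a b, A a -> B b -> W (mul a b));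
  inv_cont : forall W, is_open W -> is_open (fun x => W (inv x))
}.

Arguments mul {_}.
Arguments inv {_}.
Arguments is_open {_}.

Definition fin_sum {S : Type} (a : S -> R) (l : list S) : R :=
  fold_right Rplus 0 (map a l).

(** [has_sum a L]: the (unordered) sum of the nonnegative family [a] is [L],
    i.e. [L] is the supremum of the finite partial sums. *)
Definition has_sum {S : Type} (a : S -> R) (L : R) : Prop :=
  is_lub (fun r => exists l : list S, NoDup l /\ r = fin_sum a l) L.

Definition l1_norm {S : Type} (g : S -> R) (N : R) : Prop :=
  has_sum (fun s => Rabs (g s)) N.

Definition partition_of_unity {G : TopGroup} {S : Type} (f : S -> G -> R) : Prop :=
  inhabited S /\
  (forall s x, 0 <= f s x <= 1) /\
  (forall x, has_sum (fun s => f s x) 1) /\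
  (* continuity of the induced map G -> l1(S) *)
  (forall x (eps : R), 0 < eps ->
     exists V : G -> Prop, is_open V /\ V x /\
       forall y, V y -> exists N, l1_norm (fun s => f s y - f s x) N /\ N < eps).

Definition translate {G : TopGroup} (g : G) (U : G -> Prop) : G -> Prop :=
  fun x => exists u, U u /\ x = mul g u.

Definition small_for_translates {G : TopGroup} {S : Type} (f : S -> G -> R)
    (U : G -> Prop) : Prop :=
  forall s, exists g : G, forall x, 0 < f s x -> translate g U x.

(* Main.v *)
Require Import Defs.
From Stdlib Require Import Reals List Lra Lia ClassicalEpsilon Classical FunctionalExtensionality PropExtensionality.
From HB Require structures.
From mathcomp Require ssreflect ssrfun ssrbool eqtype boolp wochoice.
Import ListNotations.
Open Scope R_scope.

Module WO.
Import structures.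
Import ssreflect ssrfun ssrbool eqtype boolp wochoice.
Lemma wo_exists (T : Type) : exists Rl : T -> T -> Prop,
  (forall A : T -> Prop, (exists x, A x) -> exists z, A z /\ forall x, A x -> Rl z x) /\
  (forall x y, Rl x y -> Rl y x -> x = y).
Proof.
pose TE : eqType := HB.pack T (gen_eqMixin T).
have [R0 wo] := well_ordering_principle TE.
exists (fun x y : T => R0 x y : Prop); split.
- move=> A [x Ax].
  have ne : nonempty (fun t : TE => `[< A t >]) by exists x; rewrite unfold_in; apply/asboolP.
  have [z [[zA zlb] _]] := wo _ ne.
  exists z; split; first by move: zA; rewrite unfold_in => /asboolP.
  by move=> y Ay; apply: zlb; rewrite unfold_in; apply/asboolP.
- have refl : forall x : TE, R0 x x.
    move=> x; have ne : nonempty (fun t : TE => t == x) by exists x; rewrite unfold_in /=.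
    have [z [[zx zlb] _]] := wo _ ne.
    move: zx; rewrite unfold_in /= => /eqP zx; rewrite -{1}zx; apply: zlb; by rewrite unfold_in /=.
  move=> x y xy yx.
  have ne : nonempty (fun t : TE => (t == x) || (t == y)) by exists x; rewrite unfold_in eqxx.
  have [z [[_ zlb] zu]] := wo _ ne.
  have ex : minimum_of R0 (fun t : TE => (t == x) || (t == y)) x.
    split; first by rewrite unfold_in eqxx.
    move=> t; rewrite unfold_in => /orP[/eqP->|/eqP->]; [exact: refl|exact: xy].
  have ey : minimum_of R0 (fun t : TE => (t == x) || (t == y)) y.
    split; first by rewrite unfold_in eqxx orbT.
    move=> t; rewrite unfold_in => /orP[/eqP->|/eqP->]; [exact: yx|exact: refl].
  by rewrite -(zu _ ex) -(zu _ ey).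
Qed.
End WO.

Definition is_inf (P : R -> Prop) (m : R) : Prop :=
  (forall r, P r -> m <= r) /\ (forall m', (forall r, P r -> m' <= r) -> m' <= m).

Definition infP (P : R -> Prop) : R := epsilon (inhabits 0) (is_inf P).

Lemma infP_spec (P : R -> Prop) : (exists r, P r) -> (forall r, P r -> 0 <= r) ->
  is_inf P (infP P).
Proof.
  intros [r0 Hr0] Hlb. unfold infP. apply epsilon_spec.
  set (E := fun x => P (- x)).
  assert (Hb : bound E). { exists 0. intros x Ex. apply Hlb in Ex. lra. }
  assert (He : exists x, E x). { exists (- r0). unfold E. rewrite Ropp_involutive. auto. }
  destruct (completeness E Hb He) as [m [Hub Hl]].
  exists (- m). split.
  - intros r Pr. assert (E (- r)) by (unfold E; rewrite Ropp_involutive; auto).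
    apply Hub in H. lra.
  - intros m' Hm'. assert (m <= - m'). { apply Hl. intros x Ex. apply Hm' in Ex. lra. } lra.
Qed.

Lemma fin_sum_nil {S} (a : S -> R) : fin_sum a [] = 0.
Proof. reflexivity. Qed.
Lemma fin_sum_cons {S} (a : S -> R) x l : fin_sum a (x :: l) = a x + fin_sum a l.
Proof. reflexivity. Qed.

Lemma fin_sum_le {S} (a b : S -> R) l : (forall s, In s l -> a s <= b s) -> fin_sum a l <= fin_sum b l.
Proof.
  induction l; intros H; rewrite ?fin_sum_nil, ?fin_sum_cons; [lra|].
  assert (a a0 <= b a0) by (apply H; simpl; auto).
  assert (fin_sum a l <= fin_sum b l) by (apply IHl; intros; apply H; simpl; auto). lra.
Qed.

Lemma fin_sum_ext {S} (a b : S -> R) l : (forall s, In s l -> a s = b s) -> fin_sum a l = fin_sum b l.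
Proof.
  induction l; intros H; rewrite ?fin_sum_nil, ?fin_sum_cons; [lra|].
  rewrite (H a0) by (simpl; auto). rewrite IHl; auto. intros; apply H; simpl; auto.
Qed.

Lemma fin_sum_nonneg {S} (a : S -> R) l : (forall s, 0 <= a s) -> 0 <= fin_sum a l.
Proof. induction l; intros H; rewrite ?fin_sum_nil, ?fin_sum_cons; [lra|]. pose proof (H a0). specialize (IHl H). lra. Qed.

Lemma fin_sum_In {S} (a : S -> R) l s : (forall s, 0 <= a s) -> In s l -> a s <= fin_sum a l.
Proof.
  induction l; intros H Hin; [destruct Hin|]. rewrite fin_sum_cons.
  destruct Hin as [->|Hin].
  - pose proof (fin_sum_nonneg a l H). lra.
  - specialize (IHl H Hin). pose proof (H a0). lra.
Qed.

Lemma fin_sum_plus {S} (a b : S -> R) l : fin_sum (fun s => a s + b s) l = fin_sum a l + fin_sum b l.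
Proof. induction l; rewrite ?fin_sum_nil, ?fin_sum_cons; [lra|]. rewrite IHl. lra. Qed.

Lemma fin_sum_scal {S} (a : S -> R) c l : fin_sum (fun s => c * a s) l = c * fin_sum a l.
Proof. induction l; rewrite ?fin_sum_nil, ?fin_sum_cons; [lra|]. rewrite IHl. lra. Qed.

Lemma fin_sum_minus {S} (a b : S -> R) l : fin_sum (fun s => a s - b s) l = fin_sum a l - fin_sum b l.
Proof. induction l; rewrite ?fin_sum_nil, ?fin_sum_cons; [lra|]. rewrite IHl. lra. Qed.

Lemma fin_sum_abs {S} (a : S -> R) l : Rabs (fin_sum a l) <= fin_sum (fun s => Rabs (a s)) l.
Proof.
  induction l; rewrite ?fin_sum_nil, ?fin_sum_cons. { rewrite Rabs_R0; lra. }
  eapply Rle_trans; [apply Rabs_triang|]. lra.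
Qed.

Lemma fin_sum_bound {S} (a : S -> R) l c : (forall s, In s l -> a s <= c) -> fin_sum a l <= INR (length l) * c.
Proof.
  induction l; intros H; rewrite ?fin_sum_nil, ?fin_sum_cons; simpl length. { simpl; lra. }
  rewrite S_INR. assert (a a0 <= c) by (apply H; simpl; auto).
  assert (fin_sum a l <= INR (length l) * c) by (apply IHl; intros; apply H; simpl; auto). lra.
Qed.

Definition eqdec {A : Type} : forall x y : A, {x = y} + {x <> y} :=
  fun x y => excluded_middle_informative (x = y).

Lemma fin_sum_remove {S} (a : S -> R) L x : NoDup L -> In x L -> fin_sum a L = a x + fin_sum a (remove eqdec x L).
Proof.
  induction L as [|y L IH]; intros ND Hin; [destruct Hin|].
  inversion ND; subst. simpl remove. destruct (eqdec x y) as [->|ne].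
  - rewrite notin_remove by auto. rewrite fin_sum_cons. reflexivity.
  - destruct Hin as [->|Hin]; [congruence|]. rewrite !fin_sum_cons. rewrite (IH H2 Hin). lra.
Qed.

Lemma NoDup_remove' {S} (L : list S) x : NoDup L -> NoDup (remove eqdec x L).
Proof.
  induction L as [|y L IH]; intros ND; simpl; [constructor|]. inversion ND; subst.
  destruct (eqdec x y); auto. constructor; auto.
  intros Hin. apply in_remove in Hin. tauto.
Qed.

Lemma fin_sum_sub {S} (a : S -> R) l L : (forall s, 0 <= a s) -> NoDup l -> NoDup L ->
  (forall s, In s l -> a s <> 0 -> In s L) -> fin_sum a l <= fin_sum a L.
Proof.
  intros Ha. revert L. induction l as [|x l IH]; intros L ndl ndL Hs.
  { rewrite fin_sum_nil. apply fin_sum_nonneg; auto. }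
  inversion ndl; subst. rewrite fin_sum_cons.
  destruct (Req_dec (a x) 0) as [E|E].
  - rewrite E. assert (fin_sum a l <= fin_sum a L) by (apply IH; auto; intros; apply Hs; simpl; auto). lra.
  - assert (HxL : In x L) by (apply Hs; simpl; auto).
    rewrite (fin_sum_remove a L x ndL HxL).
    assert (fin_sum a l <= fin_sum a (remove eqdec x L)); [|lra].
    apply IH; auto.
    + apply NoDup_remove'; auto.
    + intros s Hin Hne. apply in_in_remove. { intros ->. contradiction. } apply Hs; simpl; auto.
Qed.

Lemma has_sum_fin {S} (a : S -> R) L : (forall s, 0 <= a s) -> NoDup L ->
  (forall s, a s <> 0 -> In s L) -> has_sum a (fin_sum a L).
Proof.
  intros Ha ND HL. split.
  - intros r [l [ndl ->]]. apply fin_sum_sub; auto.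
  - intros b Hb. apply Hb. exists L; auto.
Qed.

Lemma has_sum_unique {S} (a : S -> R) x y : has_sum a x -> has_sum a y -> x = y.
Proof. apply is_lub_u. Qed.

Definition rr (n : nat) : R := (/2)^n.
Lemma rr_pos n : 0 < rr n.
Proof. unfold rr. apply pow_lt. lra. Qed.
Lemma rr_S n : rr (S n) = rr n / 2.
Proof. unfold rr. simpl. lra. Qed.
Lemma rr_mono m n : (m <= n)%nat -> rr n <= rr m.
Proof.
  induction 1; [lra|]. rewrite rr_S. pose proof (rr_pos m0). lra.
Qed.
Lemma rr_small e : 0 < e -> exists n, rr n < e.
Proof.
  intros He. destruct (pow_lt_1_zero (/2) ltac:(rewrite Rabs_pos_eq; lra) e He) as [N HN].
  exists N. specialize (HN N (le_n N)). rewrite Rabs_pos_eq in HN; auto.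
  unfold rr. apply pow_le. lra.
Qed.

Definition opt {X} (Q : X -> Prop) : option X :=
  match excluded_middle_informative (exists b, Q b) with
  | left H => Some (proj1_sig (constructive_indefinite_description _ H))
  | right _ => None end.
Lemma opt_Some {X} (Q : X -> Prop) b : opt Q = Some b -> Q b.
Proof.
  unfold opt. destruct excluded_middle_informative; [|discriminate].
  intros E; inversion E. apply proj2_sig.
Qed.
Lemma opt_None {X} (Q : X -> Prop) : opt Q = None -> forall b, ~ Q b.
Proof.
  unfold opt. destruct excluded_middle_informative; [discriminate|]. intros _ b Hb. apply n. eauto.
Qed.

Fixpoint mkL {X} (P : nat -> X -> Prop) (m : nat) : list (X * nat) :=
  match m with
  | 0 => []
  | S m' => match opt (P m') with Some b => (b, m') :: mkL P m' | None => mkL P m' end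
  end.

Lemma mkL_In {X} (P : nat -> X -> Prop) m b i : In (b, i) (mkL P m) -> (i < m)%nat /\ P i b.
Proof.
  induction m; simpl; [tauto|]. destruct (opt (P m)) eqn:E.
  - intros [H|H]. + inversion H; subst. split; [lia|]. apply opt_Some; auto.
    + apply IHm in H. split; [lia|tauto].
  - intros H; apply IHm in H; split; [lia|tauto].
Qed.

Lemma mkL_NoDup {X} (P : nat -> X -> Prop) m : NoDup (mkL P m).
Proof.
  induction m; simpl; [constructor|]. destruct (opt (P m)); auto.
  constructor; auto. intros H; apply mkL_In in H. lia.
Qed.

Lemma mkL_complete {X} (P : nat -> X -> Prop) m b i :
  (forall i b1 b2, P i b1 -> P i b2 -> b1 = b2) -> (i < m)%nat -> P i b -> In (b, i) (mkL P m).
Proof.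
  intros Hu. induction m; intros Hi Hb; [lia|]. simpl.
  destruct (Nat.eq_dec i m) as [->|ne].
  - destruct (opt (P m)) eqn:E.
    + left. f_equal. apply opt_Some in E. eapply Hu; eauto.
    + exfalso. eapply opt_None; eauto.
  - assert (In (b, i) (mkL P m)) by (apply IHm; auto; lia).
    destruct (opt (P m)); simpl; auto.
Qed.

Section Stone.
Variable X : Type.
Variable d : X -> X -> R.
Hypothesis d_nonneg : forall x y, 0 <= d x y.
Hypothesis d_refl : forall x, d x x = 0.
Hypothesis d_sym : forall x y, d x y = d y x.
Hypothesis d_tri : forall x y z, d x z <= d x y + d y z.
Variable Rl : X -> X -> Prop.
Hypothesis Rl_min : forall A : X -> Prop, (exists x, A x) -> exists z, A z /\ forall x, A x -> Rl z x.
Hypothesis Rl_anti : forall x y, Rl x y -> Rl y x -> x = y.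
Variable r0 : R.
Hypothesis r0pos : 0 < r0.

Lemma Rl_total a b : Rl a b \/ Rl b a.
Proof.
  destruct (Rl_min (fun t => t = a \/ t = b) (ex_intro _ a (or_introl eq_refl))) as [z [[->| ->] H]].
  - left. apply H. auto.
  - right. apply H. auto.
Qed.

Definition sigma (c : X) : X :=
  epsilon (inhabits c) (fun a => d a c < r0 /\ forall b, d b c < r0 -> Rl a b).
Lemma sigma_spec c : d (sigma c) c < r0 /\ forall b, d b c < r0 -> Rl (sigma c) b.
Proof.
  unfold sigma. apply epsilon_spec. apply Rl_min. exists c. rewrite d_refl. auto.
Qed.

Definition Vgen (P : X -> Prop) (n : nat) (b y : X) : Prop :=
  exists c, sigma c = b /\ ~ P c /\ (forall z, d c z < 3 * rr n -> d b z < r0) /\ d c y < rr n.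

Fixpoint Wp (n : nat) : X -> Prop :=
  match n with 0 => fun _ => False
  | S m => fun c => Wp m c \/ exists b, Vgen (Wp m) m b c end.

Definition Vl n b := Vgen (Wp n) n b.

Lemma Wp_intro j n b c : (j < n)%nat -> Vl j b c -> Wp n c.
Proof.
  induction n; intros Hj H; [lia|]. simpl. destruct (Nat.eq_dec j n) as [->|ne].
  - right. exists b. exact H.
  - left. apply IHn; auto. lia.
Qed.

Lemma Wp_elim n c : Wp n c -> exists j b, (j < n)%nat /\ Vl j b c.
Proof.
  induction n; simpl; [tauto|]. intros [H|[b H]].
  - destruct (IHn H) as [j [b [? ?]]]. exists j, b. split; auto; lia.
  - exists n, b. split; auto.
Qed.

Lemma Vl_r0 n b y : Vl n b y -> d b y < r0.
Proof.
  intros [c [_ [_ [H3 H4]]]]. apply H3. pose proof (rr_pos n). lra.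
Qed.

Lemma Vl_open n b y : Vl n b y -> exists rho, 0 < rho /\ forall z, d y z < rho -> Vl n b z.
Proof.
  intros [c [H1 [H2 [H3 H4]]]]. exists (rr n - d c y). split; [lra|].
  intros z Hz. exists c. repeat split; auto. pose proof (d_tri c y z). lra.
Qed.

Lemma cover x : exists n b, Vl n b x.
Proof.
  destruct (sigma_spec x) as [Hs _].
  destruct (rr_small ((r0 - d (sigma x) x) / 3) ltac:(lra)) as [n Hn].
  destruct (classic (Wp n x)) as [HW|HW].
  - destruct (Wp_elim n x HW) as [j [b [_ H]]]. eauto.
  - exists n, (sigma x), x. repeat split; auto.
    + intros z Hz. pose proof (d_tri (sigma x) x z). lra.
    + rewrite d_refl. apply rr_pos.
Qed.

Lemma sep_aux i b1 b2 y1 y2 x : Vl i b1 y1 -> Vl i b2 y2 -> d x y1 < rr (S i) -> d x y2 < rr (S i) ->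
  Rl b1 b2 -> b1 = b2.
Proof.
  intros [c1 [E1 [_ [H1 D1]]]] [c2 [E2 [_ [_ D2]]]] X1 X2 R12.
  assert (d b1 c2 < r0).
  { apply H1. rewrite rr_S in X1, X2.
    pose proof (d_tri c1 y1 c2). pose proof (d_tri y1 x c2). pose proof (d_tri x y2 c2).
    rewrite (d_sym y1 x) in *. rewrite (d_sym y2 c2) in *. lra. }
  apply Rl_anti; auto. rewrite <- E2. apply (proj2 (sigma_spec c2)). auto.
Qed.

Lemma sep i b1 b2 y1 y2 x : Vl i b1 y1 -> Vl i b2 y2 -> d x y1 < rr (S i) -> d x y2 < rr (S i) -> b1 = b2.
Proof.
  intros. destruct (Rl_total b1 b2).
  - eapply sep_aux; eauto.
  - symmetry. eapply sep_aux; eauto.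
Qed.

Lemma far x n a j i k b y : (forall z, d x z < rr j -> Vl n a z) -> (n < i)%nat -> (j < i)%nat -> (j < k)%nat ->
  d x y < rr k -> ~ Vl i b y.
Proof.
  intros Hball Hni Hji Hjk Hy [c [_ [Hc [_ Dc]]]].
  assert (d x c >= rr j).
  { destruct (Rle_or_lt (rr j) (d x c)); [lra|]. exfalso. apply Hc. apply (Wp_intro n i a c Hni). apply Hball; auto. }
  pose proof (d_tri x y c). rewrite (d_sym y c) in *.
  pose proof (rr_mono (S j) k Hjk). pose proof (rr_mono (S j) i Hji). rewrite rr_S in *. lra.
Qed.

Lemma locfin x : exists rho, 0 < rho /\ exists L : list (X * nat), NoDup L /\
  (forall b i y, d x y < rho -> Vl i b y -> In (b, i) L).
Proof.
  destruct (cover x) as [n [a Ha]].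
  destruct (Vl_open n a x Ha) as [rho [Hrho Hb]].
  destruct (rr_small rho Hrho) as [j Hj].
  set (k := S (n + j)).
  exists (rr k). split; [apply rr_pos|].
  set (P := fun i b => exists y, d x y < rr k /\ Vl i b y).
  exists (mkL P k). split; [apply mkL_NoDup|].
  intros b i y Hy HV. apply mkL_complete.
  - intros i' b1 b2 [y1 [D1 V1]] [y2 [D2 V2]].
    destruct (Compare_dec.le_lt_dec k i') as [Hki|Hki].
    + exfalso. eapply (far x n a j i' k b1 y1); eauto; try lia.
      intros z Hz. apply Hb. lra.
    + pose proof (rr_mono (S i') k ltac:(lia)). apply (sep i' b1 b2 y1 y2 x V1 V2); lra.
  - destruct (Compare_dec.le_lt_dec k i) as [Hki|Hki]; auto.
    exfalso. eapply (far x n a j i k b y); eauto; try lia. intros z Hz. apply Hb. lra.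
  - exists y; auto.
Qed.

Definition hh (s : X * nat) (y : X) : R :=
  infP (fun t => t = 1 \/ exists z, ~ Vl (snd s) (fst s) z /\ t = d y z).

Lemma hh_spec s y : is_inf (fun t => t = 1 \/ exists z, ~ Vl (snd s) (fst s) z /\ t = d y z) (hh s y).
Proof.
  apply infP_spec. exists 1; auto. intros r [->|[z [_ ->]]]; auto. lra.
Qed.

Lemma hh_nonneg s y : 0 <= hh s y.
Proof. apply (proj2 (hh_spec s y)). intros r [->|[z [_ ->]]]; auto. lra. Qed.

Lemma hh_le1 s y : hh s y <= 1.
Proof. apply (proj1 (hh_spec s y)). auto. Qed.

Lemma hh_lip s y y' : hh s y - d y y' <= hh s y'.
Proof.
  apply (proj2 (hh_spec s y')). intros r [->|[z [Hz ->]]].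
  - pose proof (hh_le1 s y). pose proof (d_nonneg y y'). lra.
  - assert (hh s y <= d y z) by (apply (proj1 (hh_spec s y)); right; eauto).
    pose proof (d_tri y y' z). lra.
Qed.

Lemma hh_abs s y y' : Rabs (hh s y' - hh s y) <= d y y'.
Proof.
  pose proof (hh_lip s y y'). pose proof (hh_lip s y' y). rewrite (d_sym y' y) in *.
  apply Rabs_le. lra.
Qed.

Lemma hh_pos_V s y : 0 < hh s y -> Vl (snd s) (fst s) y.
Proof.
  intros H. apply NNPP. intros HV.
  assert (hh s y <= d y y) by (apply (proj1 (hh_spec s y)); right; eauto).
  rewrite d_refl in *. lra.
Qed.

Lemma hh_V_pos s y : Vl (snd s) (fst s) y -> 0 < hh s y.
Proof.
  intros HV. destruct (Vl_open _ _ _ HV) as [rho [Hr Hb]].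
  assert (Rmin 1 rho <= hh s y).
  { apply (proj2 (hh_spec s y)). intros r [->|[z [Hz ->]]].
    - apply Rmin_l.
    - destruct (Rle_or_lt rho (d y z)). + pose proof (Rmin_r 1 rho). lra.
      + exfalso. apply Hz. auto. }
  unfold Rmin in *. destruct Rle_dec; lra.
Qed.


Variable op : (X -> Prop) -> Prop.
Hypothesis cont : forall x e, 0 < e -> exists V, op V /\ V x /\ forall y, V y -> d x y < e.

Definition LLP x (p : R * list (X * nat)) : Prop :=
  0 < fst p /\ NoDup (snd p) /\ forall b i y, d x y < fst p -> Vl i b y -> In (b, i) (snd p).
Definition LL x := epsilon (inhabits (1, [])) (LLP x).
Lemma LL_spec x : LLP x (LL x).
Proof.
  unfold LL. apply epsilon_spec. destruct (locfin x) as [rho [Hr [L [ND HL]]]].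
  exists (rho, L). split; auto.
Qed.

Lemma supp_L x y s : d x y < fst (LL x) -> hh s y <> 0 -> In s (snd (LL x)).
Proof.
  intros Hy Hh. destruct s as [b i]. destruct (LL_spec x) as [_ [_ HL]].
  apply (HL b i y Hy). apply (hh_pos_V (b, i) y). pose proof (hh_nonneg (b, i) y). lra.
Qed.

Definition HH x := fin_sum (fun s => hh s x) (snd (LL x)).

Lemma HH_sum_L x y : d x y < fst (LL x) -> has_sum (fun s => hh s y) (fin_sum (fun s => hh s y) (snd (LL x))).
Proof.
  intros Hy. apply has_sum_fin. - intros; apply hh_nonneg. - apply (LL_spec x).
  - intros s Hs. apply (supp_L x y s Hy Hs).
Qed.

Lemma HH_sum x : has_sum (fun s => hh s x) (HH x).
Proof. apply HH_sum_L. rewrite d_refl. apply (LL_spec x). Qed.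

Lemma HH_eq x y : d x y < fst (LL x) -> HH y = fin_sum (fun s => hh s y) (snd (LL x)).
Proof. intros Hy. apply (has_sum_unique (fun s => hh s y)). apply HH_sum. apply HH_sum_L; auto. Qed.

Lemma hh_le_HH s x : hh s x <= HH x.
Proof.
  destruct (Req_dec (hh s x) 0) as [E|E].
  - rewrite E. apply fin_sum_nonneg. intros; apply hh_nonneg.
  - apply (fin_sum_In (fun s => hh s x)); [intros s0; apply hh_nonneg|]. apply (supp_L x x s); auto.
    rewrite d_refl. apply (LL_spec x).
Qed.

Lemma HH_pos x : 0 < HH x.
Proof.
  destruct (cover x) as [n [b H]]. pose proof (hh_V_pos (b, n) x H).
  pose proof (hh_le_HH (b, n) x). lra.
Qed.

Definition ff (s : X * nat) (x : X) : R := hh s x / HH x.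

Lemma ff_bounds s x : 0 <= ff s x <= 1.
Proof.
  unfold ff. pose proof (HH_pos x). pose proof (hh_nonneg s x). pose proof (hh_le_HH s x).
  split. - unfold Rdiv. apply Rmult_le_pos; [lra|]. left; apply Rinv_0_lt_compat; lra.
  - apply Rmult_le_reg_r with (HH x); auto. unfold Rdiv. rewrite Rmult_assoc, Rinv_l by lra. lra.
Qed.

Lemma ff_sum x : has_sum (fun s => ff s x) 1.
Proof.
  pose proof (HH_pos x).
  assert (E : 1 = fin_sum (fun s => ff s x) (snd (LL x))).
  { unfold ff. unfold Rdiv. transitivity (/ HH x * HH x). { field. lra. }
    unfold HH. rewrite <- fin_sum_scal. apply fin_sum_ext. intros; lra. }
  rewrite E. apply has_sum_fin. - intros; apply ff_bounds. - apply (LL_spec x).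
  - intros s Hs. apply (supp_L x x s). rewrite d_refl; apply (LL_spec x).
    unfold ff in Hs. intros E'. apply Hs. rewrite E'. unfold Rdiv; ring.
Qed.

Lemma ff_cont x e : 0 < e -> exists V, op V /\ V x /\
  forall y, V y -> exists N, l1_norm (fun s => ff s y - ff s x) N /\ N < e.
Proof.
  intros He. destruct (LL_spec x) as [Hrho [ND HL]].
  set (rho := fst (LL x)) in *. set (L := snd (LL x)) in *.
  set (K := INR (length L)). set (B := HH x).
  assert (HB : 0 < B) by apply HH_pos.
  assert (HK : 0 <= K) by apply pos_INR.
  set (dl := Rmin rho (Rmin (e * B / (4 * (K + 1))) (B / (2 * (K + 1))))).
  assert (Hdl : 0 < dl).
  { unfold dl. apply Rmin_pos; auto. apply Rmin_pos; apply Rdiv_lt_0_compat; try nra. }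
  destruct (cont x dl Hdl) as [V [HV [Vx HVy]]].
  exists V. split; auto. split; auto. intros y Vy.
  set (t := d x y). assert (Ht : t < dl) by (apply HVy; auto).
  assert (Ht0 : 0 <= t) by apply d_nonneg.
  assert (D1 : dl <= rho) by (unfold dl; apply Rmin_l).
  assert (D2 : dl <= e * B / (4 * (K + 1))) by (unfold dl; eapply Rle_trans; [apply Rmin_r|apply Rmin_l]).
  assert (D3 : dl <= B / (2 * (K + 1))) by (unfold dl; eapply Rle_trans; [apply Rmin_r|apply Rmin_r]).
  assert (Htr : t < rho) by lra.
  assert (Hte : t <= e * B / (4 * (K + 1))) by lra.
  assert (HtB : t <= B / (2 * (K + 1))) by lra.
  set (A := HH y).
  assert (EA : A = fin_sum (fun s => hh s y) L) by (apply HH_eq; auto).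
  assert (Sd : fin_sum (fun s => Rabs (hh s y - hh s x)) L <= K * t).
  { apply fin_sum_bound. intros s _. apply hh_abs. }
  assert (HAB : Rabs (A - B) <= K * t).
  { rewrite EA. unfold B, HH. fold L. rewrite <- fin_sum_minus.
    eapply Rle_trans; [apply fin_sum_abs|]. auto. }
  assert (KtB : K * t <= B / 2).
  { assert (K * t <= K * (B / (2 * (K + 1)))) by (apply Rmult_le_compat_l; auto).
    assert (K * (B / (2 * (K + 1))) <= B / 2).
    { unfold Rdiv. rewrite Rinv_mult. apply Rmult_le_reg_r with (2 * (K + 1)); [nra|].
      field_simplify; [nra|lra]. }
    lra. }
  assert (HA : B / 2 <= A) by (pose proof (Rle_abs (- (A - B))); rewrite Rabs_Ropp in *; lra).
  assert (HA0 : 0 < A) by lra.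
  set (a := fun s => Rabs (ff s y - ff s x)).
  exists (fin_sum a L). split.
  - unfold l1_norm. apply has_sum_fin; auto. { intros; apply Rabs_pos. }
    intros s Hs. apply NNPP. intros Hn. apply Hs. unfold a, ff.
    assert (hh s y = 0). { apply NNPP. intros H'. apply Hn. apply (supp_L x y s); [exact Htr|auto]. }
    assert (hh s x = 0). { apply NNPP. intros H'. apply Hn. apply (supp_L x x s); auto. rewrite d_refl; exact Hrho. }
    fold A B. rewrite H, H0. unfold Rdiv. rewrite !Rmult_0_l, Rminus_0_r, Rabs_R0. auto.
  - assert (Hpt : forall s, a s <= / A * Rabs (hh s y - hh s x) + Rabs (/ A - / B) * hh s x).
    { intros s. unfold a, ff. fold A B.
      replace (hh s y / A - hh s x / B) with (/ A * (hh s y - hh s x) + (/ A - / B) * hh s x) by (field; lra).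
      eapply Rle_trans; [apply Rabs_triang|]. rewrite !Rabs_mult.
      rewrite (Rabs_pos_eq (/ A)) by (left; apply Rinv_0_lt_compat; lra).
      rewrite (Rabs_pos_eq (hh s x)) by apply hh_nonneg. lra. }
    eapply Rle_lt_trans; [apply fin_sum_le; intros s _; apply Hpt|].
    rewrite fin_sum_plus, fin_sum_scal.
    rewrite (fin_sum_scal (fun s => hh s x)). change (fin_sum (fun s => hh s x) L) with B.
    assert (E2 : Rabs (/ A - / B) * B = Rabs (A - B) / A).
    { replace (/ A - / B) with ((B - A) * / (A * B)) by (field; lra).
      rewrite Rabs_mult, (Rabs_pos_eq (/ (A * B))) by (left; apply Rinv_0_lt_compat; nra).
      rewrite <- Rabs_Ropp. replace (- (B - A)) with (A - B) by ring. field. lra. }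
    rewrite E2.
    assert (/ A * fin_sum (fun s => Rabs (hh s y - hh s x)) L <= / A * (K * t)).
    { apply Rmult_le_compat_l; auto. left; apply Rinv_0_lt_compat; lra. }
    assert (Rabs (A - B) / A <= K * t / A).
    { unfold Rdiv. apply Rmult_le_compat_r; auto. left; apply Rinv_0_lt_compat; lra. }
    assert (2 * (K * t) / A <= 4 * (K * t) / B).
    { unfold Rdiv. apply Rmult_le_reg_r with (A * B); [nra|].
      replace (2 * (K * t) * / A * (A * B)) with (2 * (K * t) * B) by (field; lra).
      replace (4 * (K * t) * / B * (A * B)) with (4 * (K * t) * A) by (field; lra).
      assert (0 <= K * t) by nra. nra. }
    assert (4 * (K * t) / B < e).
    { apply Rmult_lt_reg_r with B; auto. unfold Rdiv. rewrite Rmult_assoc, Rinv_l by lra.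
      assert (K * t <= K * (e * B / (4 * (K + 1)))) by (apply Rmult_le_compat_l; auto).
      assert (K * (e * B / (4 * (K + 1))) * 4 < e * B).
      { unfold Rdiv. rewrite Rinv_mult. apply Rmult_lt_reg_r with (K + 1); [lra|].
        field_simplify; [nra|lra]. }
      lra. }
    replace (/ A * (K * t)) with (K * t / A) in * by (unfold Rdiv; ring).
    replace (2 * (K * t) / A) with (K * t / A + K * t / A) in * by (unfold Rdiv; ring).
    lra.
Qed.

End Stone.

Section Grp.
Variable G : TopGroup.

Lemma inv_one : inv (one G) = one G.
Proof. rewrite <- (mul_one_r G (inv (one G))). apply mul_inv_l. Qed.

Lemma inv_mul_cancel (x y : G) : mul (inv x) (mul x y) = y.
Proof. rewrite mul_assoc, mul_inv_l, mul_one_l. auto. Qed.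
Lemma mul_inv_cancel (x y : G) : mul x (mul (inv x) y) = y.
Proof. rewrite mul_assoc, mul_inv_r, mul_one_l. auto. Qed.

Lemma inv_unique (x y : G) : mul x y = one G -> inv x = y.
Proof.
  intros H. rewrite <- (mul_one_r G (inv x)), <- H, inv_mul_cancel. auto.
Qed.

Lemma inv_inv (x : G) : inv (inv x) = x.
Proof. apply inv_unique. apply mul_inv_l. Qed.

Lemma inv_mul (x y : G) : inv (mul x y) = mul (inv y) (inv x).
Proof.
  apply inv_unique. rewrite <- mul_assoc, (mul_assoc _ y), mul_inv_r, mul_one_l, mul_inv_r. auto.
Qed.

Lemma open_ext (P Q : G -> Prop) : (forall x, P x <-> Q x) -> is_open P -> is_open Q.
Proof.
  intros H HP. replace Q with P; auto. apply functional_extensionality. intros x.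
  apply propositional_extensionality. auto.
Qed.

Lemma open_local (P : G -> Prop) :
  (forall x, P x -> exists B, is_open B /\ B x /\ forall z, B z -> P z) -> is_open P.
Proof.
  intros H.
  set (I := {B : G -> Prop | is_open B /\ forall z, B z -> P z}).
  apply (open_ext (fun x => exists i : I, proj1_sig i x)).
  - intros x. split.
    + intros [i Bx]. destruct i as [B [HB HBP]]. simpl in Bx. auto.
    + intros Px. destruct (H x Px) as [B [HB [Bx HBP]]]. exists (exist _ B (conj HB HBP)). auto.
  - apply open_union. intros i. exact (proj1 (proj2_sig i)).
Qed.

Lemma open_translate (V : G -> Prop) (g : G) : is_open V -> is_open (fun y => V (mul g y)).
Proof.
  intros HV. apply open_local. intros y Hy.
  destruct (mul_cont G g y V HV Hy) as [A [B [HA [HB [Ag [By HAB]]]]]].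
  exists B. repeat split; auto.
Qed.

Lemma shrink_ex (W : G -> Prop) : exists V : G -> Prop, (is_open W /\ W (one G)) ->
  is_open V /\ V (one G) /\ (forall z, V z -> V (inv z)) /\
  (forall a b c, V a -> V b -> V c -> W (mul a (mul b c))).
Proof.
  destruct (classic (is_open W /\ W (one G))) as [[HW We]|Hn]; [|exists W; tauto].
  assert (Half : forall W : G -> Prop, is_open W -> W (one G) -> exists C : G -> Prop,
            is_open C /\ C (one G) /\ (forall a b, C a -> C b -> W (mul a b))).
  { clear. intros W HW We.
    rewrite <- (mul_one_l G (one G)) in We.
    destruct (mul_cont G _ _ W HW We) as [A [B [HA [HB [Ae [Be HAB]]]]]].
    exists (fun x => A x /\ B x). split; [apply open_inter; auto|]. split; auto.
    intros a b [? ?] [? ?]. auto. }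
  destruct (Half W HW We) as [C1 [HC1 [C1e HC1m]]].
  destruct (Half C1 HC1 C1e) as [C2 [HC2 [C2e HC2m]]].
  set (D := fun x => C2 x /\ C1 x).
  exists (fun x => D x /\ D (inv x)). intros _.
  assert (HD : is_open D) by (apply open_inter; auto).
  split; [apply open_inter; auto; apply inv_cont; auto|].
  split. { rewrite inv_one. unfold D; tauto. }
  split. { intros z [? ?]. rewrite inv_inv. auto. }
  intros a b c [[Ca1 Ca2] _] [[Cb1 Cb2] _] [[Cc1 Cc2] _]. apply HC1m; auto.
Qed.

Definition shrink (W : G -> Prop) : G -> Prop :=
  proj1_sig (constructive_indefinite_description _ (shrink_ex W)).
Lemma shrink_spec W : is_open W -> W (one G) ->
  is_open (shrink W) /\ shrink W (one G) /\ (forall z, shrink W z -> shrink W (inv z)) /\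
  (forall a b c, shrink W a -> shrink W b -> shrink W c -> W (mul a (mul b c))).
Proof. intros. unfold shrink. apply (proj2_sig (constructive_indefinite_description _ (shrink_ex W))). auto. Qed.

Variable W : G -> Prop.
Hypothesis W_open : is_open W.
Hypothesis W_one : W (one G).

Fixpoint Vs (n : nat) : G -> Prop :=
  match n with 0 => fun _ => True | S m => shrink (fun z => Vs m z /\ W z) end.

Lemma Vs_basic n : is_open (Vs n) /\ Vs n (one G).
Proof.
  induction n; simpl. { split; auto. apply open_full. }
  destruct IHn. destruct (shrink_spec (fun z => Vs n z /\ W z)) as [? [? _]]; auto.
  apply open_inter; auto.
Qed.

Lemma Vs_S_spec n : (forall z, Vs (S n) z -> Vs (S n) (inv z)) /\
  (forall a b c, Vs (S n) a -> Vs (S n) b -> Vs (S n) c -> Vs n (mul a (mul b c)) /\ W (mul a (mul b c))).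
Proof.
  destruct (Vs_basic n). destruct (shrink_spec (fun z => Vs n z /\ W z)) as [_ [_ [? ?]]]; auto.
  apply open_inter; auto.
Qed.

Lemma Vs_sym n z : Vs n z -> Vs n (inv z).
Proof. destruct n; simpl; auto. apply (proj1 (Vs_S_spec n)). Qed.

Lemma Vs_triple n a b c : Vs (S n) a -> Vs (S n) b -> Vs (S n) c -> Vs n (mul a (mul b c)).
Proof. intros. apply (proj2 (Vs_S_spec n)); auto. Qed.

Lemma Vs_step n z : Vs (S n) z -> Vs n z.
Proof.
  intros H. pose proof (proj2 (Vs_basic (S n))).
  rewrite <- (mul_one_r G z), <- (mul_one_r G (one G)). apply Vs_triple; auto.
Qed.

Lemma Vs_mono m n z : (m <= n)%nat -> Vs n z -> Vs m z.
Proof. induction 1; auto. intros; apply IHle, Vs_step; auto. Qed.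

Lemma Vs_W z : Vs 1 z -> W z.
Proof.
  intros H. pose proof (proj2 (Vs_basic 1)).
  rewrite <- (mul_one_r G z), <- (mul_one_r G (one G)). apply (proj2 (Vs_S_spec 0)); auto.
Qed.

Inductive chain : G -> G -> list nat -> Prop :=
| ch_nil x : chain x x []
| ch_cons x y z n l : Vs n (mul (inv x) y) -> chain y z l -> chain x z (n :: l).

Fixpoint wsum (l : list nat) : R := match l with [] => 0 | n :: l' => rr n + wsum l' end.

Lemma wsum_nonneg l : 0 <= wsum l.
Proof. induction l; simpl; [lra|]. pose proof (rr_pos a). lra. Qed.
Lemma wsum_app l1 l2 : wsum (l1 ++ l2) = wsum l1 + wsum l2.
Proof. induction l1; simpl; [lra|]. rewrite IHl1. lra. Qed.

Lemma chain_app x y z l1 l2 : chain x y l1 -> chain y z l2 -> chain x z (l1 ++ l2).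
Proof. induction 1; simpl; auto. intros; econstructor; eauto. Qed.

Lemma chain_rev x y l : chain x y l -> chain y x (rev l).
Proof.
  induction 1; simpl; [constructor|]. apply chain_app with y; auto.
  econstructor; [|constructor].
  replace (mul (inv y) x) with (inv (mul (inv x) y)) by (rewrite inv_mul, inv_inv; auto).
  apply Vs_sym; auto.
Qed.

Lemma wsum_rev l : wsum (rev l) = wsum l.
Proof. induction l; simpl; auto. rewrite wsum_app, IHl. simpl. lra. Qed.

Lemma chain_split x z p m q : chain x z (p ++ m :: q) ->
  exists a b, chain x a p /\ Vs m (mul (inv a) b) /\ chain b z q.
Proof.
  revert x. induction p; intros x H; simpl in H.
  - inversion H; subst. exists x, y. split; [constructor|]. auto.
  - inversion H; subst. destruct (IHp y H5) as [a0 [b [? [? ?]]]].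
    exists a0, b. split; auto. econstructor; eauto.
Qed.

Lemma list_split (l : list nat) t : l <> [] -> 0 <= t ->
  exists p m q, l = p ++ m :: q /\ wsum p <= t /\ wsum q <= Rmax (wsum l - t) 0.
Proof.
  revert t. induction l as [|x r IH]; intros t Hne Ht; [congruence|].
  destruct (classic (rr x > t \/ r = [])) as [Hc|Hc].
  - exists [], x, r. split; auto. simpl. split; [lra|].
    destruct Hc as [Hc| ->].
    + apply Rle_trans with (rr x + wsum r - t); [lra|apply Rmax_l].
    + simpl. apply Rmax_r.
  - apply not_or_and in Hc. destruct Hc as [Hc1 Hc2].
    destruct (IH (t - rr x) Hc2 ltac:(lra)) as [p [m [q [E [Hp Hq]]]]].
    exists (x :: p), m, q. split; [simpl; rewrite E; auto|]. simpl. split; [lra|].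
    replace (rr x + wsum r - t) with (wsum r - (t - rr x)) by ring. auto.
Qed.

Lemma frink_aux k : forall l x y N, (length l <= k)%nat -> chain x y l -> wsum l <= rr (S N) ->
  Vs N (mul (inv x) y).
Proof.
  induction k; intros l x y N Hlen Hc Hs.
  - destruct l; [|simpl in Hlen; lia]. inversion Hc; subst. rewrite mul_inv_l. apply Vs_basic.
  - destruct l as [|n0 l0].
    { inversion Hc; subst. rewrite mul_inv_l. apply Vs_basic. }
    set (l := n0 :: l0) in *.
    assert (Hne : l <> []) by discriminate.
    destruct (list_split l (wsum l / 2) Hne) as [p [m [q [E [Hp Hq]]]]].
    { pose proof (wsum_nonneg l). lra. }
    rewrite E in Hc. destruct (chain_split _ _ _ _ _ Hc) as [a [b [Ha [Hm Hb]]]].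
    assert (Hlp : length l = (length p + S (length q))%nat) by (rewrite E, length_app; simpl; lia).
    assert (Hw : wsum l = wsum p + rr m + wsum q) by (rewrite E, wsum_app; simpl; lra).
    pose proof (wsum_nonneg l). pose proof (wsum_nonneg p). pose proof (wsum_nonneg q).
    assert (Hq' : wsum q <= wsum l / 2).
    { eapply Rle_trans; [apply Hq|]. unfold Rmax. destruct Rle_dec; lra. }
    rewrite rr_S in Hs.
    assert (Hp2 : wsum p <= rr (S (S N))) by (rewrite !rr_S; lra).
    assert (Hq2 : wsum q <= rr (S (S N))) by (rewrite !rr_S; lra).
    assert (V1 : Vs (S N) (mul (inv x) a)) by (apply (IHk p); auto; lia).
    assert (V3 : Vs (S N) (mul (inv b) y)) by (apply (IHk q); auto; lia).
    assert (V2 : Vs (S N) (mul (inv a) b)).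
    { apply (Vs_mono (S N) m); auto. destruct (Compare_dec.le_lt_dec (S N) m) as [?|Hlt]; auto.
      exfalso. pose proof (rr_mono m N ltac:(lia)). pose proof (rr_pos (S N)). rewrite rr_S in *. lra. }
    pose proof (Vs_triple N _ _ _ V1 V2 V3).
    rewrite <- !mul_assoc, !mul_inv_cancel in H2. auto.
Qed.

Definition dd (x y : G) : R := infP (fun r => exists l, chain x y l /\ r = wsum l).

Lemma dd_spec x y : is_inf (fun r => exists l, chain x y l /\ r = wsum l) (dd x y).
Proof.
  apply infP_spec.
  - exists (wsum [0%nat]). exists [0%nat]. split; auto. econstructor; [|constructor]. simpl; auto.
  - intros r [l [_ ->]]. apply wsum_nonneg.
Qed.

Lemma dd_le_chain x y l : chain x y l -> dd x y <= wsum l.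
Proof. intros H. apply (proj1 (dd_spec x y)). eauto. Qed.

Lemma dd_nonneg x y : 0 <= dd x y.
Proof. apply (proj2 (dd_spec x y)). intros r [l [_ ->]]. apply wsum_nonneg. Qed.

Lemma dd_refl x : dd x x = 0.
Proof.
  pose proof (dd_nonneg x x). pose proof (dd_le_chain x x [] (ch_nil x)). simpl in *. lra.
Qed.

Lemma dd_sym_le x y : dd y x <= dd x y.
Proof.
  apply (proj2 (dd_spec x y)). intros r [l [Hc ->]]. rewrite <- wsum_rev.
  apply dd_le_chain. apply chain_rev; auto.
Qed.

Lemma dd_sym x y : dd x y = dd y x.
Proof. pose proof (dd_sym_le x y). pose proof (dd_sym_le y x). lra. Qed.

Lemma dd_tri x y z : dd x z <= dd x y + dd y z.
Proof.
  assert (forall l2, chain y z l2 -> dd x z - wsum l2 <= dd x y).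
  { intros l2 H2. apply (proj2 (dd_spec x y)). intros r [l1 [H1 ->]].
    pose proof (dd_le_chain _ _ _ (chain_app _ _ _ _ _ H1 H2)). rewrite wsum_app in H. lra. }
  assert (dd x z - dd x y <= dd y z).
  { apply (proj2 (dd_spec y z)). intros r [l [Hl ->]]. specialize (H l Hl). lra. }
  lra.
Qed.

Lemma dd_small x y N : dd x y < rr (S N) -> Vs N (mul (inv x) y).
Proof.
  intros H. destruct (classic (exists l, chain x y l /\ wsum l < rr (S N))) as [[l [Hc Hl]]|Hn].
  - apply (frink_aux (length l) l); auto. lra.
  - exfalso. assert (rr (S N) <= dd x y); [|lra].
    apply (proj2 (dd_spec x y)). intros r [l [Hc ->]].
    destruct (Rle_or_lt (rr (S N)) (wsum l)); auto. exfalso; eauto.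
Qed.

Lemma dd_cont x e : 0 < e -> exists V, is_open V /\ V x /\ forall y, V y -> dd x y < e.
Proof.
  intros He. destruct (rr_small e He) as [N HN].
  exists (fun y => Vs N (mul (inv x) y)). split; [apply open_translate, Vs_basic|].
  split. { rewrite mul_inv_l. apply Vs_basic. }
  intros y Hy. pose proof (dd_le_chain x y [N] (ch_cons _ _ _ _ _ Hy (ch_nil y))). simpl in H. lra.
Qed.

End Grp.

Theorem mainTheorem4 (G : TopGroup) (U : G -> Prop) :
  is_open U -> (exists u, U u) ->
  exists (S : Type) (f : S -> G -> R),
    partition_of_unity f /\ small_for_translates f U.
Proof.
  intros HU [u Uu].
  set (W := fun z => U (mul u z)).
  assert (HW : is_open W) by (apply open_translate; auto).
  assert (We : W (one G)) by (unfold W; rewrite mul_one_r; auto).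
  set (d := dd G W).
  pose proof (dd_nonneg G W) as D1. pose proof (dd_refl G W) as D2.
  pose proof (dd_sym G W HW We) as D3. pose proof (dd_tri G W) as D4.
  destruct (WO.wo_exists G) as [Rl [Rmin Ranti]].
  assert (r0pos : 0 < rr 2) by apply rr_pos.
  pose proof (dd_cont G W HW We) as Cont.
  exists (G * nat)%type, (ff G d Rl (rr 2)). split; [split; [|split; [|split]]|].
  - constructor. exact (one G, 0%nat).
  - intros s x. apply (ff_bounds _ _ D1 D2 D3 D4 _ Rmin Ranti _ r0pos).
  - intros x. apply (ff_sum _ _ D1 D2 D3 D4 _ Rmin Ranti _ r0pos).
  - intros x e He. apply (ff_cont _ _ D1 D2 D3 D4 _ Rmin Ranti _ r0pos is_open Cont x e He).
  - intros [b i]. exists (mul b (inv u)). intros x Hx.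
    pose proof (HH_pos _ _ D1 D2 D3 D4 _ Rmin Ranti _ r0pos x) as HHp.
    assert (Hh : 0 < hh G d Rl (rr 2) (b, i) x).
    { unfold ff in Hx. pose proof (hh_nonneg G d D1 Rl (rr 2) (b, i) x).
      destruct H; auto. rewrite <- H in Hx. unfold Rdiv in Hx. rewrite Rmult_0_l in Hx. lra. }
    apply (hh_pos_V _ _ D1 D2 D3 _ _ (b, i) x) in Hh. simpl in Hh.
    apply Vl_r0 in Hh.
    apply (dd_small G W HW We b x 1) in Hh. apply (Vs_W G W HW We) in Hh.
    exists (mul u (mul (inv b) x)). split; [exact Hh|].
    rewrite <- mul_assoc, inv_mul_cancel, mul_inv_cancel. auto.
Qed.
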